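(* Let $n\ge1$, $N\ge1$, $p\in(0,1)$, and let $I:\{0,1\}^n\to\{0,1\}$ be a decoding-error indicator with error-correcting capability $t$ ($0\le t<n$, $I(\mathbf z)=0$ whenever $wt(\mathbf z)\le t$). For $q\in(0,1)$ let $\hat P_{IS}(e)=\frac1N\sum_{j=1}^N I(\mathbf z_j)W(wt(\mathbf z_j);p,q)$ with $\mathbf z_j$ i.i.d. with pmf $q^{wt(\mathbf z)}(1-q)^{n-wt(\mathbf z)}$. Then for all $q\in(0,1)$, $$\frac{\partial}{\partial q}\mathrm{var}_q\big[\hat P_{IS}(e)\big]=-\frac1N\sum_{i=t+1}^{n}\frac{i-nq}{q(1-q)}\,W(i;p,q)\,P_p(e;i).$$
   Context: Setting: linear block code of length $n$ over a binary symmetric channel with cross-over probability $p$; all-zero codeword transmitted so the channel output is the error pattern $\mathbf z\in\{0,1\}^n$. $wt(\mathbf z)$ is the number of ones. $I(\mathbf z)=1$ iff $\mathbf z$ is erroneously decoded. $W(i;p,q)=\frac{p^i(1-p)^{n-i}}{q^i(1-q)^{n-i}}$. $P_p(e;i)=\sum_{\mathbf z:\,wt(\mathbf z)=i}I(\mathbf z)p^i(1-p)^{n-i}$. $\mathrm{var}_q$ is the variance when samples have pmf $q^{wt(\mathbf z)}(1-q)^{n-wt(\mathbf z)}$. *)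

(* Defs.v *)
From HB Require Import structures.
From mathcomp Require Import all_boot all_order all_algebra.
From mathcomp Require Import all_classical all_reals all_analysis.
Unset Printing Implicit Defensive.
Import Order.TTheory GRing.Theory Num.Theory.
Local Open Scope ring_scope.

Definition word (n : nat) := {ffun 'I_n -> bool}.

Definition wt {n : nat} (z : word n) : nat := #|[pred i | z i]|.

Definition W {R : realType} (n i : nat) (p q : R) : R :=
  (p ^+ i * (1 - p) ^+ (n - i)) / (q ^+ i * (1 - q) ^+ (n - i)).

Definition pmf_word {R : realType} {n : nat} (q : R) (z : word n) : R :=
  q ^+ wt z * (1 - q) ^+ (n - wt z).

Definition Ppe {R : realType} {n : nat} (I : word n -> bool) (p : R) (i : nat) : R :=
  \sum_(z : word n | wt z == i) (I z)%:R * (p ^+ i * (1 - p) ^+ (n - i)).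

Definition sample (N n : nat) := {ffun 'I_N -> word n}.

Definition pmf_sample {R : realType} {N n : nat} (q : R) (zs : sample N n) : R :=
  \prod_(j < N) pmf_word q (zs j).

Definition hatP {R : realType} (N : nat) {n : nat} (I : word n -> bool) (p q : R)
  (zs : sample N n) : R :=
  N%:R^-1 * \sum_(j < N) (I (zs j))%:R * W n (wt (zs j)) p q.

Definition var_IS {R : realType} (N : nat) {n : nat} (I : word n -> bool) (p q : R) : R :=
  \sum_(zs : sample N n) pmf_sample q zs * (hatP N I p q zs) ^+ 2
  - (\sum_(zs : sample N n) pmf_sample q zs * hatP N I p q zs) ^+ 2.

(* Main.v *)
Set Warnings "-all".
Require Import Defs.
From HB Require Import structures.
From mathcomp Require Import all_boot all_order all_algebra.
From mathcomp Require Import all_classical all_reals all_analysis.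
From mathcomp Require Import ring lra.
Import Order.TTheory GRing.Theory Num.Theory.
Import numFieldNormedType.Exports.
Local Open Scope ring_scope.

Section D.
Variable R : realType.

Lemma is_derive_pow (x : R) k :
  is_derive x 1 (fun y : R => y ^+ k) (k%:R * x ^+ k.-1).
Proof.
have H := @is_deriveX R R id k x 1 1 (is_derive_id x 1).
have -> : (fun y : R => y ^+ k) = (id ^+ k) by apply/funext => y; rewrite exprfctE.
by apply: is_derive_eq H _; rewrite /=; rewrite /GRing.scale /= mulr1 /=.
Qed.

Lemma is_derive_pow1m (x : R) k :
  is_derive x 1 (fun y : R => (1 - y) ^+ k) (- (k%:R * (1 - x) ^+ k.-1)).
Proof.
have H1 : is_derive x 1 (cst 1 - id : R -> R) (0 - 1).
  exact: is_deriveB.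
have H := @is_deriveX R R (cst 1 - id) k x 1 _ H1.
have -> : (fun y : R => (1 - y) ^+ k) = ((cst 1 - id) ^+ k) by apply/funext => y; rewrite exprfctE.
by apply: is_derive_eq H _; rewrite /= sub0r; rewrite /GRing.scale /= mulrN1.
Qed.

Lemma predpow (y : R) k : k%:R * y ^+ k.-1 * y = k%:R * y ^+ k.
Proof. by case: k => [|k]; rewrite ?mul0r ?mul0r //= -mulrA -exprSr. Qed.

Lemma is_derive_W n i (p x : R) : (i <= n)%N -> x != 0 -> 1 - x != 0 ->
  is_derive x 1 (fun y => W n i p y)
   (- ((i%:R - n%:R * x) / (x * (1 - x))) * W n i p x).
Proof.
move=> hi x0 x1.
set dh := (x ^+ i * (- ((n-i)%:R * (1 - x) ^+ (n-i).-1)) + (1 - x) ^+ (n - i) * (i%:R * x ^+ i.-1)).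
have Hh : is_derive x 1 ((fun y : R => y ^+ i) * (fun y => (1 - y) ^+ (n - i))) dh.
  exact: is_deriveM (is_derive_pow _ _) (is_derive_pow1m _ _).
have hx : ((fun y : R => y ^+ i) * (fun y => (1 - y) ^+ (n - i))) x != 0.
  by rewrite /= mulf_neq0 // expf_neq0.
have HV := is_deriveV hx Hh.
have HZ := is_deriveZ (p ^+ i * (1 - p) ^+ (n - i)) HV.
have -> : (fun y => W n i p y) = ((p ^+ i * (1 - p) ^+ (n - i)) *: (fun y => (((fun y : R => y ^+ i) * (fun y => (1 - y) ^+ (n - i))) y)^-1)).
  by apply/funext => y; rewrite /W /=.
apply: is_derive_eq HZ _.
rewrite /= /GRing.scale /=.
change (((fun y : R => y ^+ i) * (fun y => (1 - y) ^+ (n - i))) x) with (x ^+ i * (1 - x) ^+ (n - i)).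
have hA : x ^+ i != 0 by rewrite expf_neq0.
have hB : (1 - x) ^+ (n - i) != 0 by rewrite expf_neq0.
have E : dh * (x * (1 - x)) = x ^+ i * (1 - x) ^+ (n - i) * (i%:R - n%:R * x).
  rewrite /dh.
  have -> : (x ^+ i * - ((n - i)%:R * (1 - x) ^+ (n - i).-1) +
     (1 - x) ^+ (n - i) * (i%:R * x ^+ i.-1)) * (x * (1 - x)) =
     - (x ^+ i * x * ((n - i)%:R * (1 - x) ^+ (n - i).-1 * (1 - x))) +
     (1 - x) ^+ (n - i) * (1 - x) * (i%:R * x ^+ i.-1 * x) by ring.
  rewrite !predpow natrB //; ring.
have E' : dh = x ^+ i * (1 - x) ^+ (n - i) * (i%:R - n%:R * x) / (x * (1 - x)).
  by rewrite -E mulfK // mulf_neq0.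
rewrite E' /W; field.
by rewrite hA hB x0 x1.
Qed.
End D.
Section V.
Variable R : realType.
Variables (T : finType) (N : nat) (f a : T -> R).
Hypothesis M0 : \sum_x f x = 1.
Let M1 := \sum_x f x * a x.
Let M2 := \sum_x f x * a x ^+ 2.

Lemma prod_if1 (F : 'I_N -> R) k : \prod_j (if j == k then F j else 1) = F k.
Proof. by rewrite -big_mkcond big_pred1_eq. Qed.

Lemma mom1 k : \sum_(zs : {ffun 'I_N -> T}) \prod_j f (zs j) * a (zs k) = M1.
Proof.
have -> : \sum_(zs : {ffun 'I_N -> T}) \prod_j f (zs j) * a (zs k) =
   \sum_(zs : {ffun 'I_N -> T}) \prod_j (f (zs j) * (if j == k then a (zs j) else 1)).
  apply: eq_bigr => zs _; rewrite big_split /=; congr (_ * _).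
  by rewrite (prod_if1 (fun j => a (zs j))).
rewrite -(bigA_distr_bigA (fun j x => f x * (if j == k then a x else 1))) /=.
rewrite (bigD1 k) //= [X in _ * X]big1 ?mulr1; first by apply: eq_bigr => x _; rewrite eqxx.
by move=> j /negbTE ->; under eq_bigr do rewrite mulr1.
Qed.

Lemma mom2 k l : \sum_(zs : {ffun 'I_N -> T}) \prod_j f (zs j) * (a (zs k) * a (zs l)) =
  M1 ^+ 2 + (if l == k then M2 - M1 ^+ 2 else 0).
Proof.
have -> : \sum_(zs : {ffun 'I_N -> T}) \prod_j f (zs j) * (a (zs k) * a (zs l)) =
   \sum_(zs : {ffun 'I_N -> T}) \prod_j (f (zs j) * (if j == k then a (zs j) else 1)
       * (if j == l then a (zs j) else 1)).
  apply: eq_bigr => zs _; rewrite !big_split /= mulrA; congr (_ * _ * _).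
    by rewrite (prod_if1 (fun j => a (zs j))).
  by rewrite (prod_if1 (fun j => a (zs j))).
rewrite -(bigA_distr_bigA (fun j x => f x * (if j == k then a x else 1) * (if j == l then a x else 1))) /=.
have [<-|nkl] := eqVneq l k.
  rewrite (bigD1 l) //= [X in _ * X]big1 ?mulr1.
    rewrite addrC subrK; apply: eq_bigr => x _; rewrite eqxx; ring.
  by move=> j /negbTE ->; under eq_bigr do rewrite !mulr1.
rewrite addr0.
transitivity (\prod_j ((if j == k then M1 else 1) * (if j == l then M1 else 1))).
  apply: eq_bigr => j _.
  have [->|njk] := eqVneq j k.
    rewrite eq_sym (negbTE nkl) mulr1; apply: eq_bigr => x _; rewrite mulr1 //.
  rewrite mul1r.
  have [_|njl] := eqVneq j l.
    by apply: eq_bigr => x _; rewrite mulr1.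
  by under eq_bigr do rewrite !mulr1.
by rewrite big_split /= !(prod_if1 (fun _ => M1)) expr2.
Qed.

Lemma var_gen : (0 < N)%N ->
  \sum_(zs : {ffun 'I_N -> T}) \prod_j f (zs j) * (N%:R^-1 * \sum_j a (zs j)) ^+ 2
  - (\sum_(zs : {ffun 'I_N -> T}) \prod_j f (zs j) * (N%:R^-1 * \sum_j a (zs j))) ^+ 2
  = N%:R^-1 * (M2 - M1 ^+ 2).
Proof.
move=> N0.
have E1 : \sum_(zs : {ffun 'I_N -> T}) \prod_j f (zs j) * (N%:R^-1 * \sum_j a (zs j))
   = N%:R^-1 * (N%:R * M1).
  rewrite (eq_bigr (fun zs : {ffun 'I_N -> T} => N%:R^-1 * \sum_k \prod_j f (zs j) * a (zs k))); last first.
    by move=> zs _; rewrite mulrCA mulr_sumr.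
  rewrite -mulr_sumr exchange_big /=.
  rewrite (eq_bigr (fun _ => M1)); last by move=> k _; exact: mom1.
  by rewrite sumr_const card_ord mulr_natl.
have E2 : \sum_(zs : {ffun 'I_N -> T}) \prod_j f (zs j) * (N%:R^-1 * \sum_j a (zs j)) ^+ 2
   = N%:R^-1 ^+ 2 * \sum_(k < N) \sum_(l < N) (M1 ^+ 2 + (if l == k then M2 - M1 ^+ 2 else 0)).
  rewrite (eq_bigr (fun zs : {ffun 'I_N -> T} => N%:R^-1 ^+ 2 * \sum_k \sum_l \prod_j f (zs j) * (a (zs k) * a (zs l)))); last first.
    move=> zs _; rewrite exprMn mulrCA; congr (_ * _).
    rewrite expr2 mulr_suml mulr_sumr; apply: eq_bigr => k _.
    by rewrite mulr_sumr mulr_sumr.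
  rewrite -mulr_sumr; congr (_ * _).
  rewrite exchange_big /=; apply: eq_bigr => k _.
  rewrite exchange_big /=; apply: eq_bigr => l _.
  exact: mom2.
rewrite E1 E2.
rewrite (eq_bigr (fun _ => N%:R * M1 ^+ 2 + (M2 - M1 ^+ 2))); last first.
  move=> k _; rewrite big_split /= sumr_const card_ord mulr_natl; congr (_ + _).
  by rewrite -big_mkcond big_pred1_eq.
rewrite sumr_const card_ord -mulr_natl.
have NZ : (N%:R : R) != 0 by rewrite pnatr_eq0 -lt0n.
by field.
Qed.
End V.

Section Q.
Variable R : realType.
Variables (n : nat) (I : word n -> bool) (p : R).

Lemma wt_le (z : word n) : (wt z <= n)%N.
Proof. by rewrite /wt -[X in (_ <= X)%N](card_ord n) max_card. Qed.

Lemma pmf_prod (q : R) (z : word n) :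
  pmf_word q z = \prod_(i < n) (if z i then q else 1 - q).
Proof.
rewrite (bigID (fun i => z i)) /=.
rewrite (eq_bigr (fun _ => q)); last by move=> i ->.
rewrite [X in _ * X](eq_bigr (fun _ => 1 - q)); last by move=> i /negbTE ->.
rewrite !prodr_const /pmf_word /wt; congr (_ * _ ^+ _).
have Hc := cardC [pred i | z i].
have Hle : (#|[pred i | z i]| <= n)%N by rewrite -[X in (_ <= X)%N](card_ord n) max_card.
apply/eqP; rewrite -(eqn_add2l #|[pred i | z i]|) subnKC //.
by rewrite Hc card_ord.
Qed.

Lemma pmf_sum1 (q : R) : \sum_(z : word n) pmf_word q z = 1.
Proof.
rewrite (eq_bigr (fun z : word n => \prod_(i < n) (if z i then q else 1 - q))); last by move=> z _; apply: pmf_prod.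
rewrite -(bigA_distr_bigA (fun (i : 'I_n) (b : bool) => if b then q else 1 - q)) /=.
by apply: big1 => i _; rewrite big_bool /= addrC subrK.
Qed.

Definition C i := p ^+ i * (1 - p) ^+ (n - i).

Lemma hne0 (q : R) i : q != 0 -> 1 - q != 0 -> q ^+ i * (1 - q) ^+ (n - i) != 0.
Proof. by move=> ??; rewrite mulf_neq0 // expf_neq0. Qed.

Lemma M1E (q : R) : q != 0 -> 1 - q != 0 ->
  \sum_(z : word n) pmf_word q z * ((I z)%:R * W n (wt z) p q) =
  \sum_(z : word n) (I z)%:R * C (wt z).
Proof.
move=> q0 q1; apply: eq_bigr => z _.
have := hne0 q (wt z) q0 q1; rewrite /pmf_word /W /C => h.
by rewrite mulrCA [X in _ * X]mulrC divfK.
Qed.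

Lemma M2E (q : R) : q != 0 -> 1 - q != 0 ->
  \sum_(z : word n) pmf_word q z * ((I z)%:R * W n (wt z) p q) ^+ 2 =
  \sum_(z : word n) (I z)%:R * W n (wt z) p q * C (wt z).
Proof.
move=> q0 q1; apply: eq_bigr => z _.
have := hne0 q (wt z) q0 q1; rewrite /pmf_word /W /C => h.
case: (I z) => /=; last by rewrite !mul0r expr0n /= mulr0.
by rewrite !mul1r expr2 mulrA [_ ^+ wt z * _ * _]mulrC divfK // mulrC.
Qed.

Lemma partE (q : R) :
  \sum_(z : word n) (I z)%:R * W n (wt z) p q * C (wt z) =
  \sum_(i < n.+1) Ppe I p i * W n i p q.
Proof.
rewrite (partition_big (fun z : word n => (inord (wt z) : 'I_n.+1)) predT) //=.
apply: eq_bigr => i _; rewrite /Ppe mulr_suml.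
apply: eq_big => [z|z /eqP Hz].
  by rewrite -val_eqE /= inordK // ltnS wt_le.
have -> : wt z = i by rewrite -Hz inordK // ltnS wt_le.
by rewrite /C; ring.
Qed.
End Q.

Theorem lemma2 (R : realType) (n N t : nat) (p : R) (I : word n -> bool)
  (hn : (1 <= n)%N) (hN : (1 <= N)%N) (hp0 : 0 < p) (hp1 : p < 1)
  (ht : (t < n)%N) (hI : forall z : word n, (wt z <= t)%N -> I z = false)
  (q : R) (hq0 : 0 < q) (hq1 : q < 1) :
  is_derive q 1 (fun q' : R => var_IS N I p q')
    (- (N%:R^-1 * \sum_(t.+1 <= i < n.+1)
          ((i%:R - n%:R * q) / (q * (1 - q))) * W n i p q * Ppe I p i)).
Proof.
set c := \sum_(z : word n) (I z)%:R * C R n p (wt z).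
set G := (N%:R^-1 : R) *: ((\sum_(i < n.+1) (Ppe I p i *: (fun y : R => W n i p y))) - cst (c ^+ 2)).
have HG : forall y : R, y != 0 -> 1 - y != 0 -> G y = var_IS N I p y.
  move=> y y0 y1.
  rewrite /var_IS /pmf_sample /hatP.
  rewrite (var_gen _ _ N _ (fun z => (I z)%:R * W n (wt z) p y) (pmf_sum1 _ n y)) //.
  rewrite M1E // M2E // partE /G /=. by rewrite fct_sumE.
have Hnear : \forall y \near q, G y = var_IS N I p y.
  have qi : q \in `]0, 1[ by rewrite in_itv /= hq0 hq1.
  near=> y.
  have : y \in `]0, 1[ by near: y; exact: near_in_itvoo qi.
  rewrite in_itv /= => /andP[y0 y1].
  apply: HG; first by rewrite gt_eqF.
  by rewrite subr_eq0 gt_eqF.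
apply: (near_eq_is_derive Hnear).
have q0 : q != 0 by rewrite gt_eqF.
have q1 : 1 - q != 0 by rewrite subr_eq0 gt_eqF.
have HW : forall i : 'I_n.+1, is_derive q 1 (Ppe I p i *: (fun y : R => W n i p y))
   (Ppe I p i *: (- ((i%:R - n%:R * q) / (q * (1 - q))) * W n i p q)).
  move=> i; apply: is_deriveZ; apply: is_derive_W => //.
  by rewrite -ltnS ltn_ord.
have H := is_deriveZ (N%:R^-1 : R) (is_deriveB (is_derive_sum HW) (is_derive_cst (c ^+ 2) q 1)).
apply: (is_derive_eq H).
rewrite subr0 /GRing.scale /=.
rewrite -(mulrN (N%:R^-1)) -sumrN; congr (_ * _).
rewrite -(big_mkord xpredT (fun i : nat => Ppe I p i * (- ((i%:R - n%:R * q) / (q * (1 - q))) * W n i p q))) (@big_cat_nat _ _ _ t.+1) //; last by rewrite ltnS ltnW.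
rewrite /=.
rewrite [X in X + _]big1_seq ?add0r; last first.
  move=> i; rewrite mem_index_iota => /andP[_ hi].
  rewrite /Ppe big1 ?mul0r // => z /eqP Hz.
  by rewrite hI ?mul0r // Hz -ltnS.
by apply: eq_bigr => i _; rewrite mulNr mulrN mulrC.
Unshelve. all: by end_near.
Qed.
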